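(* Let $m,n$ be positive integers with $m$ even, and let $R$ be an $m\times n$ rectangular permutation matrix. If $R$ is not centrosymmetric, then there exist $m\times n$ centrosymmetric rectangular permutation matrices $Q_1\neq Q_2$ such that $R+R^\pi=Q_1+Q_2$.
   Context: A rectangular permutation matrix is an $m\times n$ $(0,1)$-matrix with exactly one $1$ in each row. For $A=(a_{i,j})\in M_{m,n}$, $A^\pi$ denotes the matrix with $(A^\pi)_{i,j}=a_{m+1-i,n+1-j}$; $A$ is centrosymmetric if $A=A^\pi$. *)

(* Defs.v *)
From mathcomp Require Import all_boot all_order all_algebra.
Set Implicit Arguments. Unset Strict Implicit. Unset Printing Implicit Defensive.
Import GRing.Theory Num.Theory.
Local Open Scope ring_scope.

(* A^pi : (A^pi)_{i,j} = a_{m+1-i, n+1-j}; with 0-based indices, rev_ord. *)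
Definition mxpi (m n : nat) (A : 'M[int]_(m, n)) : 'M[int]_(m, n) :=
  \matrix_(i < m, j < n) A (rev_ord i) (rev_ord j).

Definition centrosymmetric (m n : nat) (A : 'M[int]_(m, n)) : Prop :=
  A = mxpi A.

Definition rect_perm_mx (m n : nat) (A : 'M[int]_(m, n)) : Prop :=
  (forall i j, A i j = 0 \/ A i j = 1) /\
  (forall i : 'I_m, #|[set j : 'I_n | A i j == 1]| = 1%N).

(* Main.v *)
Require Import Defs.
From mathcomp Require Import all_boot all_order all_algebra.
From mathcomp Require Import zify.
Local Open Scope ring_scope.

Lemma rev_half (m : nat) (i : 'I_m) : ~~ odd m ->
  ((rev_ord i < m./2)%N = ~~ (i < m./2)%N).
Proof.
move=> hm; have := odd_double_half m; rewrite (negbTE hm) add0n => e.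
have hi := ltn_ord i; rewrite -muln2 in e; rewrite /=.
apply/idP/idP; rewrite -leqNgt; lia.
Qed.

Lemma card_rev (m n : nat) (R : 'M[int]_(m, n)) r :
  #|[set j : 'I_n | R r (rev_ord j) == 1]| = #|[set j : 'I_n | R r j == 1]|.
Proof.
have -> : [set j : 'I_n | R r (rev_ord j) == 1] = (@rev_ord n) @: [set j : 'I_n | R r j == 1].
  apply/setP => j; rewrite inE; apply/idP/imsetP.
    by move=> h; exists (rev_ord j); rewrite ?inE ?rev_ordK.
  by case=> x; rewrite inE => h ->; rewrite rev_ordK.
by rewrite card_imset //; apply: rev_ord_inj.
Qed.

Theorem mainTheorem2 (m n : nat) (R : 'M[int]_(m, n)) :
  (0 < m)%N -> (0 < n)%N -> ~~ odd m ->
  rect_perm_mx R -> ~ centrosymmetric R ->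
  exists Q1 Q2 : 'M[int]_(m, n),
    rect_perm_mx Q1 /\ rect_perm_mx Q2 /\
    centrosymmetric Q1 /\ centrosymmetric Q2 /\
    Q1 <> Q2 /\ R + mxpi R = Q1 + Q2.
Proof.
move=> _ _ hm [R01 Rc] hnc.
exists (\matrix_(i, j) if (i < m./2)%N then R i j else R (rev_ord i) (rev_ord j)).
exists (\matrix_(i, j) if (i < m./2)%N then R (rev_ord i) (rev_ord j) else R i j).
split; [|split; [|split; [|split; [|split]]]].
- split; first by move=> i j; rewrite mxE; case: ifP.
  move=> i; under eq_finset => j do rewrite mxE.
  by case: (i < m./2)%N; rewrite ?card_rev.
- split; first by move=> i j; rewrite mxE; case: ifP.
  move=> i; under eq_finset => j do rewrite mxE.
  by case: (i < m./2)%N; rewrite ?card_rev.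
- apply/matrixP => i j; rewrite /mxpi !mxE rev_half // !rev_ordK.
  by case: ifP.
- apply/matrixP => i j; rewrite /mxpi !mxE rev_half // !rev_ordK.
  by case: ifP.
- move/matrixP => h; apply: hnc; apply/matrixP => i j.
  have := h i j; rewrite /mxpi !mxE.
  by case: ifP.
- apply/matrixP => i j; rewrite /mxpi !mxE.
  by case: ifP => _ //; rewrite GRing.addrC.
Qed.
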